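(* Let $\lambda$ be a partition with $n$ parts, let $\beta \in UBP_\lambda(n)$, and set $\delta := \Delta_\lambda(\beta)$. Let $\pi$ be a permutation of $[n]$ and let $\Lambda = (\Lambda_1,\dots,\Lambda_n) \in \mathcal{LD}_\lambda(\beta;\pi)$. Then for each $m \in [n]$ the component $\Lambda_m$ passes through the point $(\lambda_{\pi_m} + n - \pi_m, \delta_{\pi_m})$ and from there proceeds only by southerly steps to its endpoint $(\lambda_{\pi_m} + n - \pi_m, \beta_{\pi_m})$.
   Context: Fix an integer $n \geq 1$ and write $[k] = \{1,\dots,k\}$. A partition is $\lambda = (\lambda_1,\dots,\lambda_n)$ with $\lambda_1 \geq \dots \geq \lambda_n \geq 0$ integers. Let $R_\lambda \subseteq [n-1]$ be the set of $q \in [n-1]$ with $\lambda_q > \lambda_{q+1}$; write its elements $q_1 < \dots < q_r$, and set $q_0 := 0$, $q_{r+1} := n$. For $h \in [r+1]$ the $h$-th carrel is the index interval $\{q_{h-1}+1,\dots,q_h\}$. A $\lambda$-tuple is an $n$-tuple $\beta$ with entries in $[n]$, considered with this carrel structure; it is upper if $\beta_i \geq i$ for all $i$. $U_\lambda(n)$ is the set of upper $\lambda$-tuples. Critical indices: for $\beta \in U_\lambda(n)$ and $h \in [r+1]$, set $x_1 := q_h$; given $x_{u-1}$, if some index $x$ with $q_{h-1} < x < x_{u-1}$ satisfies $\beta_{x_{u-1}} - \beta_x > x_{u-1} - x$, let $x_u$ be the largest such $x$, otherwise stop. The $x_u$ are the critical indices of $\beta$ in carrel $h$. For $i \in [n]$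 let $x(i)$ be the smallest critical index in the carrel of $i$ with $x(i) \geq i$. The $\lambda$-core is $\Delta_\lambda(\beta) := \delta$ with $\delta_i := \beta_{x(i)} - (x(i)-i)$, and the $\lambda$-platform is $\Xi_\lambda(\beta) := \xi$ with $\xi_i := \beta_{x(i)}$. $UBP_\lambda(n)$ is the set of $\beta \in U_\lambda(n)$ with $\beta_i \leq \Xi_\lambda(\beta)_i$ for all $i$. Lattice paths: lattice points are integer pairs $(a,b)$ with $a \geq 0$, $b \geq 1$. A lattice path is a sequence of lattice points each consecutive step of which is an easterly step $(a,b) \to (a+1,b)$ or a southerly step $(a,b) \to (a,b+1)$. An $n$-path is $(\Lambda_1,\dots,\Lambda_n)$ with $\Lambda_m$ a lattice path starting at $(n-m,m)$. The terminals of $(\lambda,\beta)$ are $P_m := (\lambda_m + n - m, \beta_m)$, $m \in [n]$. For a permutation $\pi$ of $[n]$, $\mathcal{LD}_\lambda(\beta;\pi)$ is the set of $n$-paths with $\Lambda_m$ ending at $P_{\pi_m}$ for every $m$ and no two distinct components sharing a lattice point. *)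

(* Defs.v *)
(* Indices are natural numbers, 1-based: [k] = {1,..,k}.
   Tuples (lambda, beta, pi, ...) are functions nat -> nat, only their values
   on [n] matter. *)
From mathcomp Require Import all_boot.
Set Implicit Arguments. Unset Strict Implicit. Unset Printing Implicit Defensive.

Definition in_range (n i : nat) : bool := (1 <= i) && (i <= n).

Definition is_partition (n : nat) (lam : nat -> nat) : Prop :=
  forall i, 1 <= i -> i < n -> lam i.+1 <= lam i.

Definition inR (n : nat) (lam : nat -> nat) (q : nat) : bool :=
  [&& 1 <= q, q <= n - 1 & lam q.+1 < lam q].

(* carrel of i is {lo i + 1, ..., hi i} *)
Definition carrel_lo (n : nat) (lam : nat -> nat) (i : nat) : nat :=
  foldr maxn 0 [seq q <- iota 0 i | inR n lam q].
Definition carrel_hi (n : nat) (lam : nat -> nat) (i : nat) : nat :=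
  head n [seq q <- iota i (n - i) | inR n lam q].

(* one step of the critical-index recursion: largest x with lo < x < y and
   beta_y - beta_x > y - x  (written in nat as beta_y + x > y + beta_x) *)
Definition next_crit (beta : nat -> nat) (lo y : nat) : option nat :=
  let s := [seq x <- iota lo.+1 (y - lo.+1) | y + beta x < beta y + x] in
  if s is [::] then None else Some (last 0 s).

Fixpoint crit_from (beta : nat -> nat) (lo y fuel : nat) : seq nat :=
  match fuel with
  | 0 => [:: y]
  | f.+1 => y :: (match next_crit beta lo y with
                  | Some x => crit_from beta lo x f
                  | None => [::] end)
  end.

(* critical indices of beta in the carrel (lo, hi]; fuel hi suffices since the
   sequence is strictly decreasing and stays above lo >= 0 *)
Definition crit_indices (beta : nat -> nat) (lo hi : nat) : seq nat :=
  crit_from beta lo hi hi.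

Definition xcrit (n : nat) (lam beta : nat -> nat) (i : nat) : nat :=
  let lo := carrel_lo n lam i in
  let hi := carrel_hi n lam i in
  foldr minn hi [seq x <- crit_indices beta lo hi | i <= x].

Definition core (n : nat) (lam beta : nat -> nat) (i : nat) : nat :=
  beta (xcrit n lam beta i) - (xcrit n lam beta i - i).

Definition platform (n : nat) (lam beta : nat -> nat) (i : nat) : nat :=
  beta (xcrit n lam beta i).

Definition is_tuple (n : nat) (beta : nat -> nat) : Prop :=
  forall i, in_range n i -> in_range n (beta i).

Definition upper (n : nat) (beta : nat -> nat) : Prop :=
  is_tuple n beta /\ forall i, in_range n i -> i <= beta i.

Definition UBP (n : nat) (lam beta : nat -> nat) : Prop :=
  upper n beta /\ forall i, in_range n i -> beta i <= platform n lam beta i.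

Definition is_perm (n : nat) (pi : nat -> nat) : Prop :=
  (forall m, in_range n m -> in_range n (pi m)) /\
  (forall m m', in_range n m -> in_range n m' -> pi m = pi m' -> m = m').

(* lattice points (a,b) with a >= 0, b >= 1; paths as nonempty point lists *)
Definition lattice_step (p q : nat * nat) : bool :=
  (q == (p.1.+1, p.2)) || (q == (p.1, p.2.+1)).

Definition lattice_path (P : seq (nat * nat)) : Prop :=
  P != [::] /\ all (fun p => 1 <= p.2) P /\
  forall j, j.+1 < size P -> lattice_step (nth (0,0) P j) (nth (0,0) P j.+1).

Definition terminal (n : nat) (lam beta : nat -> nat) (m : nat) : nat * nat :=
  (lam m + n - m, beta m).

Definition LD (n : nat) (lam beta pi : nat -> nat)
    (L : nat -> seq (nat * nat)) : Prop :=
  (forall m, in_range n m ->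
     lattice_path (L m) /\
     head (0,0) (L m) = (n - m, m) /\
     last (0,0) (L m) = terminal n lam beta (pi m)) /\
  (forall m m' p, in_range n m -> in_range n m' -> m <> m' ->
     p \in L m -> p \notin L m').

(* Main.v *)
Require Import Defs.
From mathcomp Require Import all_boot.
From mathcomp Require Import zify.
Set Implicit Arguments. Unset Strict Implicit. Unset Printing Implicit Defensive.

Lemma foldr_minn_le_d d l : foldr minn d l <= d.
Proof. elim: l => //= a l IH; lia. Qed.

Lemma foldr_minn_le d l z : z \in l -> foldr minn d l <= z.
Proof.
elim: l => //= a l IH; rewrite inE => /orP [/eqP ->|/IH H]; lia.
Qed.

Lemma foldr_minn_shift d t l : d <= t -> foldr minn d l = minn d (foldr minn t l).
Proof.
move=> H; elim: l => /=; first by apply/esym/minn_idPl.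
by move=> a l ->; rewrite minnCA.
Qed.

Lemma foldr_maxn_mem l : foldr maxn 0 l \in 0 :: l.
Proof.
elim: l => //= a l IH; rewrite /maxn; case: ifP => _.
  by move: IH; rewrite !inE => /orP [->|->]; rewrite ?orbT.
by rewrite !inE eqxx orbT.
Qed.

Lemma foldr_maxn_ge l z : z \in l -> z <= foldr maxn 0 l.
Proof.
elim: l => //= a l IH; rewrite inE => /orP [/eqP ->|/IH H]; lia.
Qed.

Lemma last_filter_iota (p : pred nat) k : forall a d j,
  j \in [seq x <- iota a k | p x] -> j <= last d [seq x <- iota a k | p x].
Proof.
elim: k => [|k IH] a d j //=.
case: (p a) => //=; last exact: IH.
rewrite inE => /orP [/eqP ->|/IH H]; last exact: (H a).
have := mem_last a [seq x <- iota a.+1 k | p x].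
rewrite inE => /orP [/eqP ->//|].
by rewrite mem_filter mem_iota => /andP [_ /andP [H _]]; apply: ltnW.
Qed.

Lemma next_crit_some beta lo y x : next_crit beta lo y = Some x ->
  lo < x < y /\ (forall j, x < j < y -> ~~ (y + beta j < beta y + j)).
Proof.
rewrite /next_crit.
case E: [seq x <- iota lo.+1 (y - lo.+1) | y + beta x < beta y + x] => [|a t] //= [<-].
have Hx : last a t \in a :: t by apply: mem_last.
rewrite -E mem_filter mem_iota in Hx.
move/andP: Hx => [_ /andP [H1 H2]].
split; first by apply/andP; split; lia.
move=> j /andP [Hj1 Hj2]; apply/negP => Hc.
have Hin : j \in [seq x <- iota lo.+1 (y - lo.+1) | y + beta x < beta y + x].
  by rewrite mem_filter Hc mem_iota /=; apply/andP; split; lia.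
have := last_filter_iota 0 Hin; rewrite E /=; lia.
Qed.

Lemma next_crit_none beta lo y : next_crit beta lo y = None ->
  (forall j, lo < j < y -> ~~ (y + beta j < beta y + j)).
Proof.
rewrite /next_crit.
case E: [seq x <- iota lo.+1 (y - lo.+1) | y + beta x < beta y + x] => [|a t] //= _.
move=> j /andP [Hj1 Hj2]; apply/negP => Hc.
have Hin : j \in [seq x <- iota lo.+1 (y - lo.+1) | y + beta x < beta y + x].
  by rewrite mem_filter Hc mem_iota /=; apply/andP; split; lia.
by rewrite E in Hin.
Qed.

Lemma crit_le beta lo f : forall y z, z \in crit_from beta lo y f -> z <= y.
Proof.
elim: f => [|f IH] y z /=; first by rewrite inE => /eqP ->.
rewrite inE => /orP [/eqP ->//|].
case E: (next_crit beta lo y) => [x|] //.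
move=> /IH H; have [/andP [_ Hxy] _] := next_crit_some E; lia.
Qed.

Lemma crit_head beta lo y f : y \in crit_from beta lo y f.
Proof. by case: f => /= *; rewrite inE eqxx. Qed.

Definition Fm beta lo y f i := foldr minn y [seq z <- crit_from beta lo y f | i <= z].

Lemma crit_main beta lo f : forall y, lo < y -> y <= lo + f.+1 -> forall i, lo < i <= y ->
  i <= Fm beta lo y f i <= y /\
  (forall j, i <= j <= Fm beta lo y f i -> Fm beta lo y f j = Fm beta lo y f i) /\
  (forall j, i <= j < Fm beta lo y f i ->
     ~~ (Fm beta lo y f i + beta j < beta (Fm beta lo y f i) + j)).
Proof.
elim: f => [|f IH] y Hlo Hy i /andP [Hi1 Hi2].
  have Ei : i = y by lia.
  have HF : forall j, j <= y -> Fm beta lo y 0 j = y.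
    by move=> j Hj; rewrite /Fm /= Hj /= minnn.
  rewrite HF //; split; first by apply/andP; split.
  split; [move=> j Hj; apply: HF; lia | move=> j Hj; lia].
set rest := match next_crit beta lo y with
            | Some x => crit_from beta lo x f | None => [::] end.
have HF : forall j, j <= y ->
   Fm beta lo y f.+1 j = minn y (foldr minn y [seq z <- rest | j <= z]).
  by move=> j Hj; rewrite /Fm /= Hj.
have Hnone : (forall j, i <= j <= y -> [seq z <- rest | j <= z] = [::]) ->
   (forall j, i <= j < y -> ~~ (y + beta j < beta y + j)) ->
   i <= Fm beta lo y f.+1 i <= y /\
  (forall j, i <= j <= Fm beta lo y f.+1 i -> Fm beta lo y f.+1 j = Fm beta lo y f.+1 i) /\
  (forall j, i <= j < Fm beta lo y f.+1 i ->
     ~~ (Fm beta lo y f.+1 i + beta j < beta (Fm beta lo y f.+1 i) + j)).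
  move=> H1 H2.
  have HF' : forall j, i <= j <= y -> Fm beta lo y f.+1 j = y.
    by move=> j Hj; rewrite HF ?H1 //= ?minnn //; case/andP: Hj.
  have -> : Fm beta lo y f.+1 i = y by apply: HF'; lia.
  split; first lia.
  split; first by move=> j Hj; apply: HF'.
  exact: H2.
rewrite /rest in HF Hnone *.
move: HF Hnone; case E: (next_crit beta lo y) => [x|] HF Hnone; last first.
  apply: Hnone => //. move=> j Hj. apply: (next_crit_none E); lia.
have [/andP [Hx1 Hx2] Hnc] := next_crit_some E.
case: (ltnP x i) => Hxi.
  apply: Hnone.
    move=> j Hj; rewrite (@eq_in_filter _ _ pred0) ?filter_pred0 //.
    move=> z /crit_le Hz /=; apply/negbTE; lia.
  move=> j Hj; apply: Hnc; lia.
have Hxl : lo < x by [].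
have Hxf : x <= lo + f.+1 by lia.
have Heq : forall j, i <= j <= x -> Fm beta lo y f.+1 j = Fm beta lo x f j.
  move=> j Hj; rewrite HF; last lia.
  have Hm : x \in [seq z <- crit_from beta lo x f | j <= z].
    by rewrite mem_filter crit_head andbT; case/andP: Hj.
  have H1 := foldr_minn_le y Hm.
  have H2 : foldr minn y [seq z <- crit_from beta lo x f | j <= z] =
            foldr minn x [seq z <- crit_from beta lo x f | j <= z].
    rewrite (@foldr_minn_shift x y); last lia. lia.
  rewrite H2 /Fm.
  have := foldr_minn_le_d x [seq z <- crit_from beta lo x f | j <= z]; lia.
have [H1 [H2 H3]] := IH x Hxl Hxf i (ltac:(lia)).
rewrite Heq; last lia.
split; first lia.
split; last exact: H3.
move=> j Hj; rewrite Heq; last lia. exact: H2.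
Qed.

Lemma lo_spec n lam i : 1 <= i ->
  carrel_lo n lam i < i /\
  (forall q, carrel_lo n lam i < q < i -> ~~ inR n lam q) /\
  (carrel_lo n lam i = 0 \/ inR n lam (carrel_lo n lam i)).
Proof.
move=> Hi; rewrite /carrel_lo.
set l := [seq q <- iota 0 i | inR n lam q].
have Hmem := foldr_maxn_mem l.
split.
  move: Hmem; rewrite inE => /orP [/eqP ->//|].
  by rewrite mem_filter mem_iota => /andP [_ /andP [_ H]].
split.
  move=> q Hq; apply/negP => Hr.
  have Hin : q \in l by rewrite mem_filter Hr mem_iota /=; lia.
  have := foldr_maxn_ge Hin; lia.
move: Hmem; rewrite inE => /orP [/eqP ->|]; first by left.
by rewrite mem_filter => /andP [H _]; right.
Qed.

Lemma hi_gen n lam k : forall a, a + k = n ->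
  let h := head n [seq q <- iota a k | inR n lam q] in
  a <= h <= n /\ (forall q, a <= q < h -> ~~ inR n lam q) /\ (h = n \/ inR n lam h).
Proof.
elim: k => [|k IH] a Ha /=.
  split; first lia. split; first lia. by left.
case E: (inR n lam a) => /=.
  split; first lia. split; first lia. by right.
have [H1 [H2 H3]] := IH a.+1 (ltac:(lia)).
split; first lia. split => //.
move=> q Hq; case: (ltnP a q) => Hq'; first by apply: H2; lia.
have -> : q = a by lia. by rewrite E.
Qed.

Lemma hi_spec n lam i : i <= n ->
  i <= carrel_hi n lam i <= n /\
  (forall q, i <= q < carrel_hi n lam i -> ~~ inR n lam q) /\
  (carrel_hi n lam i = n \/ inR n lam (carrel_hi n lam i)).
Proof. move=> Hi; apply: hi_gen; lia. Qed.

Lemma same_carrel n lam i j : 1 <= i -> i <= j -> j <= carrel_hi n lam i -> carrel_hi n lam i <= n ->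
  carrel_lo n lam j = carrel_lo n lam i /\ carrel_hi n lam j = carrel_hi n lam i.
Proof.
move=> Hi Hij Hjh Hhn.
have [L1 [L2 L3]] := lo_spec n lam Hi.
have [L1' [L2' L3']] := lo_spec n lam (ltac:(lia) : 1 <= j).
have [H1 [H2 H3]] := hi_spec lam (ltac:(lia) : i <= n).
have [H1' [H2' H3']] := hi_spec lam (ltac:(lia) : j <= n).
split.
  case: (ltngtP (carrel_lo n lam j) (carrel_lo n lam i)) => // C.
    case: L3 => [E|R]; first lia.
    have := L2' (carrel_lo n lam i) (ltac:(lia)); by rewrite R.
  case: L3' => [E|R]; first lia.
  case: (ltnP (carrel_lo n lam j) i) => C2.
    have := L2 (carrel_lo n lam j) (ltac:(lia)); by rewrite R.
  have := H2 (carrel_lo n lam j) (ltac:(lia)); by rewrite R.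
case: (ltngtP (carrel_hi n lam j) (carrel_hi n lam i)) => // C.
  case: H3' => [E|R]; first lia.
  have := H2 (carrel_hi n lam j) (ltac:(lia)); by rewrite R.
case: H3 => [E|R]; first lia.
have := H2' (carrel_hi n lam i) (ltac:(lia)); by rewrite R.
Qed.

Lemma path_sum P : lattice_path P -> forall k, k < size P ->
  (nth (0,0) P k).1 + (nth (0,0) P k).2 = (head (0,0) P).1 + (head (0,0) P).2 + k.
Proof.
move=> [Hne [_ Hst]]; elim => [|k IH] Hk.
  by case: P Hne Hst Hk => //= a t; rewrite addn0.
have := Hst k Hk; rewrite /lattice_step => /orP [/eqP ->|/eqP ->] /=;
rewrite -?addnS -?addSn ?IH; lia.
Qed.

Lemma path_mono P : lattice_path P -> forall k k', k <= k' -> k' < size P ->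
  (nth (0,0) P k).1 <= (nth (0,0) P k').1 /\ (nth (0,0) P k).2 <= (nth (0,0) P k').2.
Proof.
move=> [Hne [_ Hst]] k; elim => [|k' IH] Hk Hk'.
  have -> : k = 0 by lia. by [].
case: (ltnP k' k) => C.
  have -> : k = k'.+1 by lia. by [].
have [IH1 IH2] := IH C (ltac:(lia)).
have := Hst k' Hk'; rewrite /lattice_step => /orP [/eqP ->|/eqP ->] /=; lia.
Qed.

Lemma perm_surj n pi : is_perm n pi -> forall j, in_range n j ->
  exists m, in_range n m /\ pi m = j.
Proof.
move=> [Hr Hinj] j Hj.
have Hu : uniq (map pi (iota 1 n)).
  rewrite map_inj_in_uniq ?iota_uniq //.
  move=> a b; rewrite !mem_iota => Ha Hb Hab; apply: Hinj => //;
  rewrite /in_range; lia.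
have Hs : {subset map pi (iota 1 n) <= iota 1 n}.
  move=> z /mapP [a]; rewrite mem_iota => Ha ->.
  have := Hr a (ltac:(rewrite /in_range; lia)); rewrite /in_range mem_iota; lia.
have [_ Heq] := uniq_min_size Hu Hs (ltac:(by rewrite size_map)).
have : j \in iota 1 n by rewrite mem_iota; move: Hj; rewrite /in_range; lia.
rewrite -Heq => /mapP [a]; rewrite mem_iota => Ha ->.
exists a; split => //; rewrite /in_range; lia.
Qed.

Theorem lemma7p1 (n : nat) (lam beta pi : nat -> nat)
    (L : nat -> seq (nat * nat)) :
  1 <= n ->
  is_partition n lam ->
  UBP n lam beta ->
  is_perm n pi ->
  LD n lam beta pi L ->
  forall m, in_range n m ->
    exists2 k, k < size (L m) &
      nth (0,0) (L m) k
        = (lam (pi m) + n - pi m, core n lam beta (pi m)) /\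
      (forall j, k <= j -> j.+1 < size (L m) ->
         nth (0,0) (L m) j.+1
           = ((nth (0,0) (L m) j).1, (nth (0,0) (L m) j).2.+1)).
Proof.
move=> Hn Hpart [[Htup Hup] Hubp] Hperm [HL Hdis] m Hm.
have Hsurj := perm_surj Hperm.
case: (Hperm) => Hpr Hpinj.
set i := pi m.
have Hi : in_range n i := Hpr m Hm.
have Hi1 : 1 <= i by case/andP: Hi.
have Hin : i <= n by case/andP: Hi.
set lo := carrel_lo n lam i. set hi := carrel_hi n lam i.
have [L1 _] := lo_spec n lam Hi1.
have [/andP [H1 H1'] [H2 _]] := hi_spec lam Hin.
have [X1 [X2 X3]] := @crit_main beta lo hi hi ltac:(lia) ltac:(lia) i ltac:(lia).
set X := Fm beta lo hi hi i in X1 X2 X3.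
have HxX : xcrit n lam beta i = X by [].
have Hxj : forall j, i <= j <= X -> xcrit n lam beta j = X.
  move=> j Hj.
  have [E1 E2] := @same_carrel n lam i j Hi1 ltac:(lia) ltac:(lia) ltac:(lia).
  rewrite /xcrit /crit_indices /= E1 E2; exact: X2 j Hj.
have Hlam : forall t, i + t <= hi -> lam (i + t) = lam i.
  elim=> [|t IH] Ht; first by rewrite addn0.
  have Hnr := H2 (i + t) ltac:(lia).
  have Hp := Hpart (i + t) ltac:(lia) ltac:(lia).
  move: Hnr; rewrite /inR -IH; last lia.
  have -> : 1 <= i + t by lia.
  have -> : i + t <= n - 1 by lia.
  rewrite addnS /= -ltnNge => Hlt; apply/eqP; rewrite eqn_leq; apply/andP; split; lia.
have Hlamj : forall j, i <= j <= X -> lam j = lam i.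
  move=> j Hj; have := Hlam (j - i) ltac:(lia); by have -> : i + (j - i) = j by lia.
have Hbj : forall j, i <= j <= X ->
   [/\ in_range n j, j <= beta j, beta j <= beta X & beta X + j <= X + beta j].
  move=> j Hj.
  have Hjr : in_range n j by rewrite /in_range; apply/andP; split; lia.
  split => //; first exact: Hup.
    by have := Hubp j Hjr; rewrite /platform Hxj.
  case: (ltnP j X) => C.
    have := X3 j ltac:(lia); lia.
  have -> : j = X by lia. by rewrite addnC.
have HbX : X <= beta X.
  have [Hr _ _ _] := Hbj X ltac:(lia). apply: Hup. exact: Hr.
set C := lam i + n.
set K := C - X + beta X.
have Hpf : forall m', in_range n m' -> i <= pi m' <= X ->
   K - n < size (L m') /\
   (nth (0,0) (L m') (K - n)).1 + (nth (0,0) (L m') (K - n)).2 = K /\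
   (nth (0,0) (L m') (K - n)).1 <= C - pi m' /\
   (nth (0,0) (L m') (K - n)).2 <= beta X /\
   nth (0,0) (L m') (K - n) \in L m'.
  move=> m' Hm' Hj.
  have [Hlp [Hh Hl]] := HL m' Hm'.
  have [Hjr Hj1 Hj2 Hj3] := Hbj (pi m') Hj.
  have Hlj := Hlamj (pi m') Hj.
  have Hsz : 0 < size (L m') by case: Hlp => Hne _; rewrite lt0n size_eq0.
  have Hm'n : m' <= n by case/andP: Hm'.
  have Hk0 : (size (L m')).-1 < size (L m') by lia.
  have Hs := path_sum Hlp Hk0.
  rewrite nth_last Hl Hh /terminal /= Hlj in Hs.
  have Hsize : K - n < size (L m').
    rewrite /K /C in Hs *. move: Hj1 Hj2 Hj3 HbX Hj Hs; lia.
  split => //.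
  have Hs2 := path_sum Hlp Hsize.
  rewrite Hh /= in Hs2.
  have [Hm1 Hm2] := path_mono Hlp (k := K - n) (k' := (size (L m')).-1) ltac:(lia) ltac:(lia).
  rewrite nth_last Hl /terminal /= Hlj in Hm1 Hm2.
  split; first by rewrite Hs2 /K /C; lia.
  split; first by rewrite /C; lia.
  split; first lia.
  exact: mem_nth.
have Hpig : forall t, t <= X - i -> forall m', in_range n m' -> pi m' = X - t ->
   (nth (0,0) (L m') (K - n)).1 = C - X + t.
  elim/ltn_ind => t IH Ht m' Hm' Hpm.
  have [Hsz [Hs [Hc [Hr Hmem]]]] := Hpf m' Hm' ltac:(rewrite Hpm; lia).
  rewrite Hpm in Hc.
  case: (ltnP ((nth (0,0) (L m') (K - n)).1) (C - X + t)) => Hlt; last lia.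
  exfalso.
  set p := nth (0,0) (L m') (K - n) in Hs Hc Hr Hmem Hlt.
  set t' := p.1 - (C - X).
  have Ht' : t' < t by rewrite /t' /K in Hs *; lia.
  have [m'' [Hm'' Hpm'']] := Hsurj (X - t') ltac:(rewrite /in_range; apply/andP; split; lia).
  have Hc'' := IH t' Ht' ltac:(lia) m'' Hm'' Hpm''.
  have [_ [Hs'' [_ [_ Hmem'']]]] := Hpf m'' Hm'' ltac:(rewrite Hpm''; lia).
  have Hpp : nth (0,0) (L m'') (K - n) = p.
    rewrite [nth _ _ _]surjective_pairing [p]surjective_pairing.
    congr (_, _); rewrite /t' /K in Hc'' Hs Hs'' *; lia.
  have Hne : m' <> m'' by move=> E; rewrite -E Hpm in Hpm''; lia.
  have := Hdis m' m'' p Hm' Hm'' Hne Hmem.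
  by rewrite -Hpp Hmem''.
have Hcol := Hpig (X - i) (leqnn _) m Hm ltac:(rewrite /i; lia).
have [Hsz [Hs [Hc [Hr Hmem]]]] := Hpf m Hm ltac:(rewrite -/i; lia).
exists (K - n) => //.
split.
  rewrite -/i /core HxX [nth _ _ _]surjective_pairing.
  congr (_, _); rewrite /K /C in Hcol Hs *; lia.
move=> j Hj Hj'.
have [Hlp [Hh Hl]] := HL m Hm.
have [[Hne [_ Hst]] _] := (Hlp, 0).
have [Hm1 _] := path_mono Hlp Hj ltac:(lia).
have [Hm2 _] := path_mono Hlp (k := j.+1) (k' := (size (L m)).-1) ltac:(lia) ltac:(lia).
rewrite nth_last Hl /terminal /= -/i in Hm2.
move: (Hst j Hj'); rewrite /lattice_step => /orP [/eqP E|/eqP E] //.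
exfalso. rewrite E /= in Hm2. rewrite /C in Hcol. lia.
Qed.
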